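(* Let $\sigma>0$ and define the even function $k:\mathbb{R}\to\mathbb{R}$ by \[ k(r)=\operatorname{erfc}\!\left(\frac{r}{\sigma\sqrt{2}}\right)-\frac{1}{\sqrt{\pi}}\left(\frac{r}{\sigma\sqrt{2}}\right)E_1\!\left(\frac{r^2}{2\sigma^2}\right)\quad (r>0),\qquad k(0)=1,\qquad k(-r)=k(r), \] where $\operatorname{erfc}(x)=1-\frac{1}{\sqrt{\pi}}\int_{-x}^{x}e^{-s^2}ds$ and $E_1(z)=\int_z^\infty \frac{e^{-s}}{s}\,ds$. Then for $t\neq 0$, \[ \mathcal{F}[k](t)=\int_{-\infty}^{\infty}k(r)e^{\mathbf{i} rt}\,dr=\frac{2}{t\sqrt{\pi}}\int_0^{\infty}E_1(r^2)\sin(\sigma\sqrt{2}\,t r)\,dr. \]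
   Context: This $k$ is the kernel $k(r)=\int_0^\infty\max\{0,1-|r|/x\}\,dF(x)$ associated with the half-normal distribution with scale $\sigma$ (density $\frac{\sqrt2}{\sigma\sqrt\pi}e^{-x^2/(2\sigma^2)}$ on $(0,\infty)$). *)

(* Defs.v *)
From Stdlib Require Import Reals.
From Coquelicot Require Import Coquelicot.
Open Scope R_scope.

Definition erfc (x : R) : R :=
  1 - / sqrt PI * RInt (fun s => exp (- s ^ 2)) (- x) x.

(* E_1(z) = int_z^oo e^{-s}/s ds  (improper integral; used only for z > 0) *)
Definition E_1 (z : R) : R :=
  RInt_gen (fun s => exp (- s) / s) (at_point z) (Rbar_locally p_infty).

(* The even kernel k (depending on the scale sigma > 0):
   k(r) = erfc(|r|/(sigma sqrt 2)) - (1/sqrt pi) (|r|/(sigma sqrt 2)) E_1(r^2/(2 sigma^2))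
   for r <> 0, and k(0) = 1.  Using |r| encodes k(-r) = k(r). *)
Definition kernel (sigma r : R) : R :=
  if Req_EM_T r 0 then 1
  else
    let a := Rabs r / (sigma * sqrt 2) in
    erfc a - / sqrt PI * a * E_1 (r ^ 2 / (2 * sigma ^ 2)).

(* Main.v *)
Require Import Defs.
From Stdlib Require Import Reals.
From Coquelicot Require Import Coquelicot.
From Stdlib Require Import Lra.
Open Scope R_scope.

Lemma ball_R (x e y : R) : ball x e y <-> Rabs (y - x) < e.
Proof. split; intro H; exact H. Qed.

Lemma is_RInt_gen_intro {V : NormedModule R_AbsRing} (f : R -> V)
  (Fa Fb : (R -> Prop) -> Prop) {FFa : Filter Fa} {FFb : Filter Fb}
  (F : R * R -> V) (l : V) :
  filter_prod Fa Fb (fun ab => is_RInt f (fst ab) (snd ab) (F ab)) ->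
  filterlim F (filter_prod Fa Fb) (locally l) ->
  is_RInt_gen f Fa Fb l.
Proof.
  intros H1 H2 P HP.
  unfold filtermapi.
  apply (filter_imp (fun ab => is_RInt f (fst ab) (snd ab) (F ab) /\ P (F ab))).
  { intros ab [Ha Hb]. exists (F ab). split; auto. }
  apply filter_and; auto. apply (H2 P HP).
Qed.

Lemma lim_pinfty_intro (F : R -> R) (l : R) :
  (forall eps : posreal, exists M, forall x, M < x -> Rabs (F x - l) < eps) ->
  filterlim F (Rbar_locally p_infty) (locally l).
Proof.
  intros H P [eps He]. destruct (H eps) as [M HM]. exists M.
  intros x Hx. apply He. apply ball_R. auto.
Qed.

Lemma lim_pinfty_elim (F : R -> R) (l : R) :
  filterlim F (Rbar_locally p_infty) (locally l) ->
  (forall eps : posreal, exists M, forall x, M < x -> Rabs (F x - l) < eps).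
Proof.
  intros H eps. destruct (H (ball l eps)) as [M HM].
  exists eps; auto. exists M. intros x Hx. apply ball_R, HM, Hx.
Qed.

Lemma cauchy_pinfty (F : R -> R) :
  (forall eps : posreal, exists M, forall x y, M <= x -> M <= y -> Rabs (F x - F y) < eps) ->
  exists l, filterlim F (Rbar_locally p_infty) (locally l).
Proof.
  intros H.
  set (FF := filtermap F (Rbar_locally p_infty)).
  assert (PF : ProperFilter' FF).
  { apply filtermap_proper_filter'. apply Proper_StrongProper. apply Rbar_locally_filter. }
  exists (R_complete_lim FF).
  intros P [eps He].
  apply (filter_imp (ball (R_complete_lim FF) eps)).
  { intros; apply He; auto. }
  apply R_complete_ax1; auto.
  intros e. destruct (H e) as [M HM]. exists (F M).
  unfold FF, filtermap. exists M. intros x Hx. apply ball_R. apply HM; lra.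
Qed.

Lemma lim_le_pinfty (F : R -> R) (l c : R) :
  filterlim F (Rbar_locally p_infty) (locally l) ->
  (exists M, forall x, M < x -> F x <= c) -> l <= c.
Proof.
  intros H [M HM]. destruct (Rle_or_lt l c) as [h|h]; auto.
  destruct (lim_pinfty_elim F l H (mkposreal _ (proj2 (Rlt_0_minus _ _) h))) as [M' HM'].
  simpl in HM'.
  set (x := Rmax M M' + 1).
  assert (h1 : M < x) by (unfold x; generalize (Rmax_l M M'); lra).
  assert (h2 : M' < x) by (unfold x; generalize (Rmax_r M M'); lra).
  specialize (HM x h1). specialize (HM' x h2).
  apply Rabs_def2 in HM'. lra.
Qed.

Lemma lim_ge_pinfty (F : R -> R) (l c : R) :
  filterlim F (Rbar_locally p_infty) (locally l) ->
  (exists M, forall x, M < x -> c <= F x) -> c <= l.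
Proof.
  intros H [M HM]. destruct (Rle_or_lt c l) as [h|h]; auto.
  destruct (lim_pinfty_elim F l H (mkposreal _ (proj2 (Rlt_0_minus _ _) h))) as [M' HM'].
  simpl in HM'.
  set (x := Rmax M M' + 1).
  assert (h1 : M < x) by (unfold x; generalize (Rmax_l M M'); lra).
  assert (h2 : M' < x) by (unfold x; generalize (Rmax_r M M'); lra).
  specialize (HM x h1). specialize (HM' x h2).
  apply Rabs_def2 in HM'. lra.
Qed.

Lemma lim_pinfty_unique (F : R -> R) (l1 l2 : R) :
  filterlim F (Rbar_locally p_infty) (locally l1) ->
  filterlim F (Rbar_locally p_infty) (locally l2) -> l1 = l2.
Proof.
  intros H1 H2. apply (filterlim_locally_unique (F := Rbar_locally p_infty) F); auto.
Qed.

Lemma cont_intro (f : R -> R) (x : R) :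
  (forall eps : posreal, exists delta : posreal, forall y, Rabs (y - x) < delta -> Rabs (f y - f x) < eps) ->
  continuous f x.
Proof.
  intros H P [eps He]. destruct (H eps) as [d Hd]. exists d. intros y Hy.
  apply He. apply ball_R. apply Hd. apply ball_R in Hy. auto.
Qed.

Lemma cont_elim (f : R -> R) (x : R) : continuous f x ->
  (forall eps : posreal, exists delta : posreal, forall y, Rabs (y - x) < delta -> Rabs (f y - f x) < eps).
Proof.
  intros H eps. destruct (H (ball (f x) eps)) as [d Hd]. exists eps; auto.
  exists d. intros y Hy. apply ball_R. apply Hd. apply ball_R. auto.
Qed.

Lemma exd_cont (f : R -> R) x : ex_derive f x -> continuous f x.
Proof. intros H. apply (ex_derive_continuous (K := R_AbsRing) (V := R_NormedModule)); auto. Qed.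

Lemma exRI_cont (f : R -> R) a b :
  (forall z, Rmin a b <= z <= Rmax a b -> continuous f z) -> ex_RInt f a b.
Proof. intros H. apply (ex_RInt_continuous (V := R_CompleteNormedModule)); auto. Qed.

Lemma RInt_correct_R (f : R -> R) a b : ex_RInt f a b -> is_RInt f a b (RInt f a b).
Proof. intros H. apply (RInt_correct (V := R_CompleteNormedModule)); auto. Qed.

Lemma RInt_scal_R (f : R -> R) a b k : ex_RInt f a b ->
  RInt (fun x => k * f x) a b = k * RInt f a b.
Proof. intros H. apply (RInt_scal (V := R_CompleteNormedModule)); auto. Qed.

Lemma RInt_comp_lin_R (f : R -> R) u v a b : ex_RInt f (u*a+v) (u*b+v) ->
  RInt (fun y => u * f (u*y+v)) a b = RInt f (u*a+v) (u*b+v).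
Proof. intros H. apply (RInt_comp_lin (V := R_CompleteNormedModule)); auto. Qed.


Lemma isd_val (f : R -> R) x l l' : is_derive f x l -> l = l' -> is_derive f x l'.
Proof. intros H ->; auto. Qed.

Lemma isd_ext (f g : R -> R) x l : (forall t, f t = g t) -> is_derive f x l -> is_derive g x l.
Proof. intros H1 H2. apply (is_derive_ext (K := R_AbsRing) (V := R_NormedModule) f); auto. Qed.

Lemma isd_plus (f g : R -> R) x df dg : is_derive f x df -> is_derive g x dg ->
  is_derive (fun y => f y + g y) x (df + dg).
Proof. intros H1 H2. apply (is_derive_plus (K := R_AbsRing) (V := R_NormedModule)); auto. Qed.

Lemma isd_mult (f g : R -> R) x df dg : is_derive f x df -> is_derive g x dg ->
  is_derive (fun y => f y * g y) x (df * g x + f x * dg).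
Proof. intros H1 H2. apply (is_derive_mult (K := R_AbsRing)); auto. intros; apply Rmult_comm. Qed.

Lemma isd_comp (f g : R -> R) x df dg : is_derive f (g x) df -> is_derive g x dg ->
  is_derive (fun y => f (g y)) x (dg * df).
Proof. intros H1 H2. apply (is_derive_comp (K := R_AbsRing) (V := R_NormedModule)); auto. Qed.

Lemma isd_cont (f : R -> R) x l : is_derive f x l -> continuous f x.
Proof. intros H. apply exd_cont. exists l; auto. Qed.

Lemma const_of_deriv0 (f : R -> R) : (forall x, is_derive f x 0) -> forall x, f x = f 0.
Proof.
  intros H x.
  assert (H1 : is_RInt (fun _ => 0) 0 x (minus (f x) (f 0))).
  { apply (is_RInt_derive (V := R_CompleteNormedModule)). intros; apply H. intros; apply continuous_const. }
  assert (H2 : is_RInt (fun _ : R => 0) 0 x (scal (x - 0) 0)) by apply (is_RInt_const (V := R_NormedModule)).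
  apply (is_RInt_unique (V := R_CompleteNormedModule)) in H1.
  apply (is_RInt_unique (V := R_CompleteNormedModule)) in H2.
  rewrite H1 in H2. unfold minus, plus, opp, scal in H2; simpl in H2. unfold mult in H2; simpl in H2. lra.
Qed.

Lemma exp_mono x y : x <= y -> exp x <= exp y.
Proof. intros [h|h]. left; apply exp_increasing; auto. subst; lra. Qed.

Lemma exp_neg_lt x : 0 < x -> exp (- x) < / x.
Proof.
  intros hx. rewrite exp_Ropp. apply Rinv_lt_contravar.
  apply Rmult_lt_0_compat; auto. apply exp_pos.
  generalize (exp_ineq1_le x); lra.
Qed.

Lemma RInt_le_R (f g : R -> R) a b : a <= b -> ex_RInt f a b -> ex_RInt g a b ->
  (forall x, a <= x <= b -> f x <= g x) -> RInt f a b <= RInt g a b.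
Proof. intros; apply RInt_le; auto. intros; apply H2; lra. Qed.

Lemma RInt_const_R a b c : RInt (fun _ : R => c) a b = (b - a) * c.
Proof. apply (RInt_const (V := R_CompleteNormedModule)). Qed.

Lemma RInt_point_R (f : R -> R) a : RInt f a a = 0.
Proof. apply (RInt_point (V := R_CompleteNormedModule)). Qed.

Lemma is_RInt_derive_R (f df : R -> R) a b :
  (forall x, Rmin a b <= x <= Rmax a b -> is_derive f x (df x)) ->
  (forall x, Rmin a b <= x <= Rmax a b -> continuous df x) ->
  is_RInt df a b (f b - f a).
Proof. intros. apply (is_RInt_derive (V := R_CompleteNormedModule)); auto. Qed.

Lemma RInt_derive_R (f df : R -> R) a b :
  (forall x, Rmin a b <= x <= Rmax a b -> is_derive f x (df x)) ->
  (forall x, Rmin a b <= x <= Rmax a b -> continuous df x) ->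
  RInt df a b = f b - f a.
Proof. intros. apply (is_RInt_unique (V := R_CompleteNormedModule)). apply is_RInt_derive_R; auto. Qed.

Lemma RInt_Chasles_R (f : R -> R) a b c : ex_RInt f a b -> ex_RInt f b c ->
  RInt f a b + RInt f b c = RInt f a c.
Proof. intros. apply (RInt_Chasles (V := R_CompleteNormedModule)); auto. Qed.

Ltac Req := match goal with |- ?a = ?b => change (@eq R a b) end.

Lemma RInt_swap_R (f : R -> R) a b : ex_RInt f a b -> RInt f b a = - RInt f a b.
Proof. intros H. symmetry. apply (opp_RInt_swap (V := R_CompleteNormedModule)); auto. Qed.

Lemma RInt_plus_R (f g : R -> R) a b : ex_RInt f a b -> ex_RInt g a b ->
  RInt (fun x => f x + g x) a b = RInt f a b + RInt g a b.
Proof. intros. apply (RInt_plus (V := R_CompleteNormedModule)); auto. Qed.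

Lemma cont_plus (f g : R -> R) x : continuous f x -> continuous g x -> continuous (fun y => f y + g y) x.
Proof. intros. apply (continuous_plus (V := R_NormedModule) f g); auto. Qed.

Lemma cont_mult (f g : R -> R) x : continuous f x -> continuous g x -> continuous (fun y => f y * g y) x.
Proof. intros. apply (continuous_mult (K := R_AbsRing) f g); auto. Qed.

Lemma cont_comp (f g : R -> R) x : continuous g x -> continuous f (g x) -> continuous (fun y => f (g y)) x.
Proof. intros. apply (continuous_comp g f); auto. Qed.

Lemma cont_const (c x : R) : continuous (fun _ : R => c) x.
Proof. apply continuous_const. Qed.

Lemma isd_ext_loc (f g : R -> R) x l : locally x (fun t => f t = g t) -> is_derive f x l -> is_derive g x l.
Proof. intros. apply (is_derive_ext_loc (K := R_AbsRing) (V := R_NormedModule) f); auto. Qed.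

Lemma ex_RInt_pos (f : R -> R) a b : 0 < a -> 0 < b -> (forall x, 0 < x -> continuous f x) -> ex_RInt f a b.
Proof.
  intros ha hb H. apply exRI_cont. intros z hz. apply H.
  generalize (Rmin_glb_lt a b 0 ha hb). lra.
Qed.

Lemma ball_R_lt (x y : R) (e : R) : ball x e y -> x - e < y < x + e.
Proof. intros H. apply ball_R in H. change (Rabs (y - x) < e) in H. apply Rabs_def2 in H. lra. Qed.

Lemma inv_lt_swap (e M : R) : 0 < e -> / e < M -> / M < e.
Proof.
  intros he hM. assert (0 < / e) by (apply Rinv_0_lt_compat; auto).
  assert (0 < M) by lra.
  apply Rlt_le_trans with (/ / e). apply Rinv_lt_contravar; auto. apply Rmult_lt_0_compat; auto.
  rewrite Rinv_inv; lra.
Qed.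


Definition gf (s : R) := exp (- s ^ 2).
Definition G (x : R) := RInt gf 0 x.

Lemma gf_cont x : continuous gf x.
Proof. apply exd_cont. unfold gf. auto_derive. auto. Qed.

Lemma gf_ex_RInt a b : ex_RInt gf a b.
Proof. apply exRI_cont. intros; apply gf_cont. Qed.

Lemma G_deriv (x : R) : is_derive G x (gf x).
Proof.
  apply (is_derive_RInt gf G 0 x).
  - apply filter_forall. intros b. apply RInt_correct_R, gf_ex_RInt.
  - apply gf_cont.
Qed.

Definition Hf (x u : R) := exp (- x ^ 2 * (1 + u ^ 2)) / (1 + u ^ 2).
Definition dHf (x u : R) := - 2 * x * exp (- x ^ 2 * (1 + u ^ 2)).
Definition H (x : R) := RInt (fun u => Hf x u) 0 1.

Lemma pos1u2 u : 0 < 1 + u ^ 2.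
Proof. nra. Qed.

Lemma Hf_deriv x u : is_derive (fun z => Hf z u) x (dHf x u).
Proof.
  unfold Hf, dHf. auto_derive.
  - generalize (pos1u2 u); lra.
  - simpl. field. generalize (pos1u2 u); simpl; lra.
Qed.

Lemma dHf_cont2 x u : continuity_2d_pt dHf x u.
Proof.
  apply continuity_2d_pt_ext with (f := fun a b => (-2 * a) * exp (- (a * a) * (1 + b * b))).
  { intros a b; unfold dHf. f_equal. f_equal. ring. }
  apply continuity_2d_pt_mult.
  - apply continuity_2d_pt_mult. apply continuity_2d_pt_const. apply continuity_2d_pt_id1.
  - apply continuity_1d_2d_pt_comp with (f := exp) (g := fun a b => - (a * a) * (1 + b * b)).
    + apply continuity_pt_filterlim. apply continuous_exp.
    + apply continuity_2d_pt_mult.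
      * apply continuity_2d_pt_opp. apply continuity_2d_pt_mult; apply continuity_2d_pt_id1.
      * apply continuity_2d_pt_plus. apply continuity_2d_pt_const.
        apply continuity_2d_pt_mult; apply continuity_2d_pt_id2.
Qed.

Lemma Hf_cont x u : continuous (fun u => Hf x u) u.
Proof. apply exd_cont. unfold Hf. auto_derive. generalize (pos1u2 u); lra. Qed.

Lemma exp_split (a b : R) : exp(- (a*(a*1))*(1+b*(b*1))) = exp(-(a*(a*1))) * exp(-((a*b+0)*((a*b+0)*1))).
Proof. rewrite <- exp_plus; f_equal; ring. Qed.

Lemma H_deriv (x : R) : is_derive H x (- 2 * gf x * G x).
Proof.
  assert (D : is_derive H x (RInt (fun t => Derive (fun u => Hf u t) x) 0 1)).
  { apply (is_derive_RInt_param (fun x u => Hf x u) 0 1 x).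
    - apply filter_forall. intros y t _. eexists; apply Hf_deriv.
    - intros t _. apply continuity_2d_pt_ext with (f := dHf).
      + intros a b. symmetry. apply is_derive_unique, Hf_deriv.
      + apply dHf_cont2.
    - apply filter_forall. intros y. apply exRI_cont. intros; apply Hf_cont. }
  replace (- 2 * gf x * G x) with (RInt (fun t => Derive (fun u => Hf u t) x) 0 1); auto.
  rewrite (RInt_ext _ (fun t => (-2 * gf x) * (x * gf (x * t + 0)))).
  2: { intros t _. transitivity (dHf x t). apply is_derive_unique, Hf_deriv.
       unfold dHf, gf. simpl.
       rewrite exp_split; ring. }
  rewrite RInt_scal_R.
  2: { apply exRI_cont. intros z _.
       apply (continuous_mult (fun _ => x) (fun z => gf (x * z + 0))). apply continuous_const.
       apply continuous_comp with (f := fun t => x * t + 0). 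
       apply exd_cont; auto_derive; auto. apply gf_cont. }
  rewrite RInt_comp_lin_R. 2: apply gf_ex_RInt.
  unfold G. replace (x * 0 + 0) with 0 by ring. replace (x * 1 + 0) with x by ring.
  reflexivity.
Qed.

Lemma H0 : H 0 = PI / 4.
Proof.
  unfold H. rewrite (RInt_ext _ (fun u => / (1 + u ^ 2))).
  2: { intros u _. unfold Hf. replace (- 0 ^ 2 * (1 + u ^ 2)) with 0 by ring. rewrite exp_0. Req. unfold Rdiv; ring. }
  rewrite (RInt_derive_R atan).
  - rewrite atan_1, atan_0. Req. ring.
  - intros u _. apply is_derive_Reals. apply derivable_pt_lim_atan.
  - intros u _. apply exd_cont. auto_derive. generalize (pos1u2 u); lra.
Qed.

Lemma Phi_const x : G x * G x + H x = PI / 4.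
Proof.
  rewrite <- H0. replace (H 0) with (G 0 * G 0 + H 0).
  2: { unfold G. rewrite RInt_point_R. Req. ring. }
  apply (const_of_deriv0 (fun x => G x * G x + H x)).
  intros y. eapply isd_val. apply isd_plus. apply isd_mult; apply G_deriv. apply H_deriv. Req. ring.
Qed.

Lemma gf_pos x : 0 < gf x.
Proof. apply exp_pos. Qed.

Lemma H_bounds x : 0 <= H x <= gf x.
Proof.
  assert (E : forall y, ex_RInt (fun u => Hf y u) 0 1).
  { intros y. apply exRI_cont. intros; apply Hf_cont. }
  split.
  - apply RInt_ge_0; auto. lra. intros u _. unfold Hf. apply Rle_mult_inv_pos. left; apply exp_pos. apply pos1u2.
  - replace (gf x) with (RInt (fun _ => gf x) 0 1) by (rewrite RInt_const_R; Req; ring).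
    apply RInt_le_R; auto. lra. apply ex_RInt_const.
    intros u _. unfold Hf, gf. generalize (pos1u2 u); intro p.
    apply Rle_trans with (exp (- x ^ 2 * (1 + u ^ 2))).
    + unfold Rdiv. rewrite <- (Rmult_1_r (exp _)) at 2. apply Rmult_le_compat_l. left; apply exp_pos.
      rewrite <- Rinv_1. apply Rinv_le_contravar; try lra. nra.
    + apply exp_mono. nra.
Qed.

Lemma G_nonneg x : 0 <= x -> 0 <= G x.
Proof. intros hx. apply RInt_ge_0; auto. apply gf_ex_RInt. intros; left; apply gf_pos. Qed.

Lemma gf_le_exp x : 1 <= x -> gf x <= exp (- x).
Proof. intros hx. unfold gf. apply exp_mono. nra. Qed.

Lemma sqrtPI_pos : 0 < sqrt PI.
Proof. apply sqrt_lt_R0. generalize PI2_1; lra. Qed.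

Lemma Gauss : filterlim G (Rbar_locally p_infty) (locally (sqrt PI / 2)).
Proof.
  apply lim_pinfty_intro. intros eps.
  set (s := sqrt PI / 2).
  assert (hs : 0 < s) by (unfold s; generalize sqrtPI_pos; lra).
  assert (hs2 : s * s = PI / 4).
  { unfold s. replace (sqrt PI / 2 * (sqrt PI / 2)) with ((sqrt PI * sqrt PI) / 4) by field.
    rewrite sqrt_sqrt; auto. generalize PI2_1; lra. }
  exists (Rmax 1 (/ (eps * s))). intros x hx.
  assert (x1 : 1 < x) by (generalize (Rmax_l 1 (/ (eps * s))); lra).
  assert (x2 : / (eps * s) < x) by (generalize (Rmax_r 1 (/ (eps * s))); lra).
  assert (hG : 0 <= G x) by (apply G_nonneg; lra).
  assert (hP := Phi_const x). assert (hH := H_bounds x).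
  assert (hg := gf_le_exp x (Rlt_le _ _ x1)). assert (he := exp_neg_lt x (ltac:(lra))).
  assert (ep := cond_pos eps).
  (* |G - s| * (G + s) = |G^2 - s^2| = H x *)
  assert (E : Rabs (G x - s) * (G x + s) = H x).
  { rewrite <- (Rabs_pos_eq (G x + s)) by lra. rewrite <- Rabs_mult.
    replace ((G x - s) * (G x + s)) with (- H x) by nra. rewrite Rabs_Ropp, Rabs_pos_eq; lra. }
  assert (hxi : / x < eps * s).
  { replace (eps * s) with (/ / (eps * s)). apply Rinv_lt_contravar. 
    apply Rmult_lt_0_compat. apply Rinv_0_lt_compat, Rmult_lt_0_compat; lra. lra. auto.
    rewrite Rinv_inv; auto. }
  assert (HH : H x < eps * s) by lra.
  destruct (Rle_or_lt eps (Rabs (G x - s))) as [c|c]; auto.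
  exfalso. assert (Rabs (G x - s) * (G x + s) >= eps * s) by nra. lra.
Qed.


Lemma RInt_G (b c : R) : RInt gf b c = G c - G b.
Proof.
  unfold G. rewrite <- (RInt_Chasles_R gf 0 b c) by apply gf_ex_RInt.
  lra.
Qed.

Lemma G_odd (a : R) : G (- a) = - G a.
Proof.
  unfold G.
  assert (E := RInt_comp_lin_R gf (-1) 0 0 a (gf_ex_RInt _ _)).
  replace (-1 * 0 + 0) with 0 in E by ring. replace (-1 * a + 0) with (-a) in E by ring.
  rewrite <- E.
  rewrite (RInt_ext _ (fun y => -1 * gf y)).
  2: { intros x _. unfold gf. Req. f_equal. f_equal. f_equal. ring. }
  rewrite RInt_scal_R by apply gf_ex_RInt. lra.
Qed.

Lemma erfc_G (a : R) : erfc a = 1 - / sqrt PI * (2 * G a).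
Proof.
  unfold erfc. change (fun s => exp (- s ^ 2)) with gf.
  rewrite RInt_G, G_odd. f_equal. f_equal. ring.
Qed.

Lemma G_le_id a : 0 <= a -> G a <= a.
Proof.
  intros ha. unfold G. replace a with (RInt (fun _ => 1) 0 a) at 2 by (rewrite RInt_const_R; Req; ring).
  apply RInt_le_R; auto. apply gf_ex_RInt. apply ex_RInt_const.
  intros x _. unfold gf. rewrite <- exp_0. apply exp_mono. nra.
Qed.

Lemma G_tail (a : R) : 0 < a -> 0 <= sqrt PI / 2 - G a <= gf a / (2 * a).
Proof.
  intros ha.
  assert (B : forall b, a <= b -> 0 <= G b - G a <= gf a / (2 * a)).
  { intros b hb. rewrite <- RInt_G. split.
    - apply RInt_ge_0; auto. apply gf_ex_RInt. intros; left; apply gf_pos.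
    - apply Rle_trans with (RInt (fun s => s / a * gf s) a b).
      + apply RInt_le_R; auto. apply gf_ex_RInt.
        apply exRI_cont. intros z _. apply cont_mult. apply exd_cont. auto_derive. lra. apply gf_cont.
        intros x hx. rewrite <- (Rmult_1_l (gf x)) at 1. apply Rmult_le_compat_r. left; apply gf_pos.
        apply (Rmult_le_reg_r a); auto. unfold Rdiv. rewrite Rmult_assoc, Rinv_l; lra.
      + rewrite (RInt_derive_R (fun s => - gf s / (2 * a))).
        * assert (0 < gf b) by apply gf_pos. assert (0 < / (2*a)) by (apply Rinv_0_lt_compat; lra).
          unfold Rdiv. nra.
        * intros x _. unfold gf. auto_derive. lra. simpl. field. lra.
        * intros x _. apply cont_mult. apply exd_cont. auto_derive. lra. apply gf_cont. }
  split.
  - cut (G a <= sqrt PI / 2). lra. apply (lim_ge_pinfty G); [apply Gauss|]. exists a. intros x hx.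
    specialize (B x (Rlt_le _ _ hx)). lra.
  - cut (sqrt PI / 2 <= G a + gf a / (2 * a)). lra.
    apply (lim_le_pinfty G); [apply Gauss|]. exists a. intros x hx.
    specialize (B x (Rlt_le _ _ hx)). lra.
Qed.


Definition f1 (s : R) := exp (- s) / s.

Lemma f1_cont s : 0 < s -> continuous f1 s.
Proof. intros h. apply exd_cont. unfold f1. auto_derive. lra. Qed.

Lemma f1_exRI a b : 0 < a -> 0 < b -> ex_RInt f1 a b.
Proof. intros. apply ex_RInt_pos; auto. apply f1_cont. Qed.

Lemma f1_pos s : 0 < s -> 0 < f1 s.
Proof. intros h. unfold f1. apply Rdiv_lt_0_compat; auto. apply exp_pos. Qed.

Lemma int_exp_neg a b : RInt (fun s => exp (- s)) a b = exp (- a) - exp (- b).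
Proof.
  rewrite (RInt_derive_R (fun s => - exp (- s))).
  - lra.
  - intros x _. auto_derive; auto. ring.
  - intros x _. apply exd_cont. auto_derive. auto.
Qed.

Lemma locally_pos z : 0 < z -> locally z (fun y => 0 < y).
Proof.
  intros hz. exists (mkposreal (z/2) ltac:(lra)). intros y hy. apply ball_R_lt in hy. simpl in hy. lra.
Qed.

Lemma f1_tail u v : 1 <= u <= v -> 0 <= RInt f1 u v <= exp (- u).
Proof.
  intros [h1 h2]. split.
  - apply RInt_ge_0; auto. apply f1_exRI; lra. intros; left; apply f1_pos; lra.
  - apply Rle_trans with (RInt (fun s => exp (- s)) u v).
    + apply RInt_le_R; auto. apply f1_exRI; lra. apply exRI_cont. intros; apply exd_cont; auto_derive; auto.
      intros x hx. unfold f1. unfold Rdiv. rewrite <- (Rmult_1_r (exp (- x))) at 2.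
      apply Rmult_le_compat_l. left; apply exp_pos. rewrite <- Rinv_1. apply Rinv_le_contravar; lra.
    + rewrite int_exp_neg. generalize (exp_pos (- v)); lra.
Qed.

Lemma E1_exists z : 0 < z -> exists l, filterlim (fun b => RInt f1 z b) (Rbar_locally p_infty) (locally l).
Proof.
  intros hz. apply cauchy_pinfty. intros eps.
  assert (ep := cond_pos eps).
  set (M := Rmax (Rmax 1 z) (/ eps) + 1).
  assert (M1 : 1 < M) by (unfold M; generalize (Rmax_l (Rmax 1 z) (/eps)) (Rmax_l 1 z); lra).
  assert (Mz : z < M) by (unfold M; generalize (Rmax_l (Rmax 1 z) (/eps)) (Rmax_r 1 z); lra).
  assert (Me : / eps < M) by (unfold M; generalize (Rmax_r (Rmax 1 z) (/eps)); lra).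
  assert (key : forall x y, M <= x -> x <= y -> Rabs (RInt f1 z x - RInt f1 z y) < eps).
  { intros x y hx hy.
    rewrite <- (RInt_Chasles_R f1 z x y) by (apply f1_exRI; lra).
    assert (E : forall a b : R, a - (a + b) = - b) by (intros; ring). rewrite E.
    rewrite Rabs_Ropp. destruct (f1_tail x y) as [t1 t2]; try lra.
    rewrite Rabs_pos_eq; auto.
    assert (exp (- x) < / x) by (apply exp_neg_lt; lra).
    assert (/ x <= / M) by (apply Rinv_le_contravar; lra).
    assert (/ M < eps).
    { apply inv_lt_swap; auto. }
    lra. }
  exists M. intros x y hx hy. destruct (Rle_or_lt x y) as [h|h].
  - apply key; auto.
  - rewrite Rabs_minus_sym. apply key; lra.
Qed.

Lemma E1_is_gen z l : 0 < z -> filterlim (fun b => RInt f1 z b) (Rbar_locally p_infty) (locally l) ->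
  is_RInt_gen f1 (at_point z) (Rbar_locally p_infty) l.
Proof.
  intros hz Hl.
  apply (is_RInt_gen_intro f1 _ _ (fun ab => RInt f1 (fst ab) (snd ab))).
  - apply Filter_prod with (fun a => a = z) (fun b => 0 < b).
    + reflexivity.
    + exists 0. auto.
    + intros x y -> hy. simpl. apply RInt_correct_R, f1_exRI; auto.
  - intros P HP. destruct (Hl P HP) as [M HM].
    apply Filter_prod with (fun a => a = z) (fun b => M < b).
    + reflexivity.
    + exists M. auto.
    + intros x y -> hy. simpl. apply HM; auto.
Qed.

Lemma E1_lim z : 0 < z -> filterlim (fun b => RInt f1 z b) (Rbar_locally p_infty) (locally (E_1 z)).
Proof.
  intros hz. destruct (E1_exists z hz) as [l Hl].
  replace (E_1 z) with l; auto. symmetry. unfold E_1.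
  apply (is_RInt_gen_unique (V := R_CompleteNormedModule)).
  apply E1_is_gen; auto.
Qed.

Lemma E1_diff z w : 0 < z -> 0 < w -> E_1 z = RInt f1 z w + E_1 w.
Proof.
  intros hz hw.
  apply (lim_pinfty_unique (fun b => RInt f1 z b)). apply E1_lim; auto.
  apply lim_pinfty_intro. intros eps.
  destruct (lim_pinfty_elim _ _ (E1_lim w hw) eps) as [M HM].
  exists (Rmax M 0). intros x hx.
  assert (x1 : M < x) by (generalize (Rmax_l M 0); lra).
  assert (x2 : 0 < x) by (generalize (Rmax_r M 0); lra).
  rewrite <- (RInt_Chasles_R f1 z w x) by (apply f1_exRI; lra).
  assert (E : forall a b c : R, a + b - (a + c) = b - c) by (intros; ring). rewrite E.
  apply HM; auto.
Qed.

Lemma E1_bounds z : 0 < z -> 0 <= E_1 z <= exp (- z) / z.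
Proof.
  intros hz. split.
  - apply (lim_ge_pinfty _ _ _ (E1_lim z hz)). exists z. intros x hx.
    apply RInt_ge_0; try lra. apply f1_exRI; lra. intros; left; apply f1_pos; lra.
  - apply (lim_le_pinfty _ _ _ (E1_lim z hz)). exists z. intros x hx.
    apply Rle_trans with (RInt (fun s => exp (- s) / z) z x).
    + apply RInt_le_R; try lra. apply f1_exRI; lra. apply exRI_cont. intros; apply exd_cont; auto_derive; lra.
      intros s hs. unfold f1, Rdiv. apply Rmult_le_compat_l. left; apply exp_pos.
      apply Rinv_le_contravar; lra.
    + rewrite (RInt_derive_R (fun s => - exp (- s) / z)).
      * assert (0 < exp (- x)) by apply exp_pos. assert (0 < / z) by (apply Rinv_0_lt_compat; lra).
        unfold Rdiv. nra.
      * intros s _. auto_derive. lra. field. lra.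
      * intros s _. apply exd_cont. auto_derive. lra.
Qed.

Lemma E1_deriv z : 0 < z -> is_derive E_1 z (- f1 z).
Proof.
  intros hz.
  apply isd_ext_loc with (f := fun y => E_1 1 + -1 * RInt f1 1 y).
  { generalize (locally_pos z hz). apply filter_imp. intros y hy.
    rewrite (E1_diff y 1); try lra. rewrite RInt_swap_R. lra. apply f1_exRI; lra. }
  eapply isd_val. apply isd_plus. apply is_derive_const. apply is_derive_scal.
  apply (is_derive_RInt f1 (fun y => RInt f1 1 y) 1 z).
  - generalize (locally_pos z hz). apply filter_imp. intros y hy. apply RInt_correct_R, f1_exRI; lra.
  - apply f1_cont; auto.
  - unfold zero; simpl. Req. ring.
Qed.

Lemma E1_small z : 0 < z <= 1 -> E_1 z <= 1 - ln z.
Proof.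
  intros [h1 h2]. rewrite (E1_diff z 1); try lra.
  assert (E1 : E_1 1 <= 1).
  { destruct (E1_bounds 1) as [_ b]; try lra. assert (exp (Ropp 1) <= 1) by (apply Rle_trans with (exp 0); [apply exp_mono; lra | rewrite exp_0; lra]).
    unfold Rdiv in b. rewrite Rinv_1 in b. lra. }
  assert (R1 : RInt f1 z 1 <= - ln z).
  { apply Rle_trans with (RInt (fun s => / s) z 1).
    - apply RInt_le_R; auto. apply f1_exRI; lra. apply exRI_cont. intros s hs.
      apply exd_cont. auto_derive. generalize (Rmin_glb_lt z 1 0 h1 Rlt_0_1); lra.
      intros s hs. unfold f1, Rdiv. rewrite <- (Rmult_1_l (/ s)) at 2. apply Rmult_le_compat_r.
      left; apply Rinv_0_lt_compat; lra. rewrite <- exp_0; apply exp_mono; lra.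
    - rewrite (RInt_derive_R ln). rewrite ln_1; lra.
      + intros s hs. apply is_derive_ln. generalize (Rmin_glb_lt z 1 0 h1 Rlt_0_1); lra.
      + intros s hs. apply exd_cont. auto_derive. generalize (Rmin_glb_lt z 1 0 h1 Rlt_0_1); lra. }
  lra.
Qed.


Definition g (a : R) := erfc a - / sqrt PI * a * E_1 (a ^ 2).

Lemma sqrtPI_ge1 : 1 <= sqrt PI.
Proof.
  generalize PI2_1 sqrtPI_pos; intros h1 h2.
  destruct (Rle_or_lt 1 (sqrt PI)) as [h|h]; auto.
  assert (sqrt PI * sqrt PI = PI) by (apply sqrt_sqrt; lra). nra.
Qed.

Lemma g_deriv (a : R) : 0 < a -> is_derive g a (- / sqrt PI * E_1 (a ^ 2)).
Proof.
  intros ha.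
  apply isd_ext with (f := fun y => (1 + (- (2 * / sqrt PI)) * G y) + (- / sqrt PI) * (y * E_1 (y ^ 2))).
  { intros y. unfold g. rewrite erfc_G. ring. }
  eapply isd_val.
  - apply isd_plus. apply isd_plus. apply is_derive_const. apply is_derive_scal. apply G_deriv.
    apply is_derive_scal. apply isd_mult. apply (is_derive_id (K := R_AbsRing)).
    apply (isd_comp E_1 (fun y => y ^ 2) a (- f1 (a ^ 2)) (2 * a)). apply E1_deriv. nra.
    auto_derive. auto. ring.
  - unfold zero, one; simpl. unfold f1, gf. assert (a <> 0) by lra.
    simpl. field. split; auto. generalize sqrtPI_pos; lra.
Qed.

Lemma g_cont a : 0 < a -> continuous g a.
Proof. intros ha. eapply isd_cont. apply g_deriv; auto. Qed.

Lemma erfc_bounds a : 0 < a -> 0 <= erfc a <= gf a / (a * sqrt PI).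
Proof.
  intros ha. rewrite erfc_G. destruct (G_tail a ha) as [t1 t2].
  assert (sp := sqrtPI_pos).
  assert (E : 1 - / sqrt PI * (2 * G a) = (2 / sqrt PI) * (sqrt PI / 2 - G a)) by (field; lra).
  rewrite E. split.
  - apply Rmult_le_pos; auto. apply Rlt_le, Rdiv_lt_0_compat; lra.
  - replace (gf a / (a * sqrt PI)) with ((2 / sqrt PI) * (gf a / (2 * a))) by (field; lra).
    apply Rmult_le_compat_l; auto. apply Rlt_le, Rdiv_lt_0_compat; lra.
Qed.

Lemma g_large a : 1 <= a -> Rabs (g a) <= 2 * exp (- a).
Proof.
  intros ha.
  assert (a0 : 0 < a) by lra.
  destruct (erfc_bounds a a0) as [e1 e2].
  destruct (E1_bounds (a ^ 2)) as [b1 b2]. nra.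
  assert (sp := sqrtPI_ge1).
  assert (hg := gf_le_exp a ha). assert (gp := gf_pos a).
  assert (k1 : 0 < / sqrt PI) by (apply Rinv_0_lt_compat; lra).
  assert (k2 : / sqrt PI <= 1) by (rewrite <- Rinv_1; apply Rinv_le_contravar; lra).
  assert (e3 : erfc a <= gf a).
  { apply Rle_trans with (1 := e2). unfold Rdiv. rewrite <- (Rmult_1_r (gf a)) at 2.
    apply Rmult_le_compat_l; try lra. rewrite <- Rinv_1. apply Rinv_le_contravar; nra. }
  assert (T1 : 0 <= / sqrt PI * a * E_1 (a ^ 2)).
  { apply Rmult_le_pos; auto. apply Rmult_le_pos; lra. }
  assert (T2 : / sqrt PI * a * E_1 (a ^ 2) <= gf a).
  { assert (a * E_1 (a ^ 2) <= gf a).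
    { apply Rle_trans with (a * (exp (- a ^ 2) / a ^ 2)). apply Rmult_le_compat_l; lra.
      unfold gf. replace (a * (exp (- a ^ 2) / a ^ 2)) with (exp (- a ^ 2) * / a) by (field; lra).
      rewrite <- (Rmult_1_r (exp (- a ^ 2))) at 2. apply Rmult_le_compat_l. left; apply exp_pos.
      rewrite <- Rinv_1. apply Rinv_le_contravar; lra. }
    rewrite Rmult_assoc. apply Rle_trans with (1 * (a * E_1 (a ^ 2))).
    apply Rmult_le_compat_r; auto. apply Rmult_le_pos; lra. lra. }
  unfold g. apply Rabs_le. split; lra.
Qed.

Lemma g0 : g 0 = 1.
Proof. unfold g. rewrite erfc_G. unfold G. rewrite RInt_point_R. ring. Qed.

Lemma ln_lt_self y : 0 < y -> ln y < y.
Proof.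
  intros hy. rewrite <- (ln_exp y) at 2. apply ln_increasing; auto.
  generalize (exp_ineq1_le y); lra.
Qed.

Lemma g_near0 (eps : posreal) : exists delta : posreal, forall a, 0 <= a < delta -> Rabs (g a - 1) < eps.
Proof.
  assert (ep := cond_pos eps).
  assert (dp : 0 < Rmin 1 ((eps / 7) ^ 2)).
  { apply Rmin_glb_lt. lra. apply pow_lt. lra. }
  exists (mkposreal _ dp). intros a [h0 h1]. change (a < Rmin 1 ((eps / 7) ^ 2)) in h1.
  assert (d1 := Rmin_l 1 ((eps / 7) ^ 2)). assert (d2 := Rmin_r 1 ((eps / 7) ^ 2)).
  destruct h0 as [h0|h0].
  2: { subst. rewrite g0. rewrite Rminus_diag, Rabs_R0. auto. }
  set (s := sqrt a).
  assert (hs : s * s = a) by (apply sqrt_sqrt; lra).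
  assert (s0 : 0 < s) by (apply sqrt_lt_R0; lra).
  assert (s1 : s < eps / 7).
  { rewrite <- (sqrt_pow2 (eps / 7)) by lra. apply sqrt_lt_1_alt. lra. }
  assert (s2 : s < 1) by nra.
  assert (Ga := G_le_id a (Rlt_le _ _ h0)). assert (Gn := G_nonneg a (Rlt_le _ _ h0)).
  destruct (E1_bounds (a ^ 2)) as [b1 _]. nra.
  assert (b2 := E1_small (a ^ 2) (ltac:(split; nra))).
  assert (L : - ln (a ^ 2) < 4 / s).
  { rewrite Rcomplements.ln_pow by lra. simpl INR.
    rewrite <- hs. rewrite ln_mult by lra.
    assert (Hl : ln (/ s) < / s) by (apply ln_lt_self; apply Rinv_0_lt_compat; lra).
    rewrite ln_Rinv in Hl by lra. unfold Rdiv. lra. }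
  assert (aE : a * E_1 (a ^ 2) <= s * s + 4 * s).
  { apply Rle_trans with (a * (1 + 4 / s)). apply Rmult_le_compat_l; lra.
    rewrite <- hs. right. field. lra. }
  assert (aE0 : 0 <= a * E_1 (a ^ 2)) by (apply Rmult_le_pos; lra).
  assert (sp := sqrtPI_ge1).
  assert (k1 : 0 < / sqrt PI) by (apply Rinv_0_lt_compat; lra).
  assert (k2 : / sqrt PI <= 1) by (rewrite <- Rinv_1; apply Rinv_le_contravar; lra).
  unfold g. rewrite erfc_G.
  replace (1 - / sqrt PI * (2 * G a) - / sqrt PI * a * E_1 (a ^ 2) - 1)
    with (- (/ sqrt PI * (2 * G a + a * E_1 (a ^ 2)))) by ring.
  rewrite Rabs_Ropp. rewrite Rabs_pos_eq.
  2: { apply Rmult_le_pos; lra. }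
  apply Rle_lt_trans with (1 * (2 * G a + a * E_1 (a ^ 2))).
  apply Rmult_le_compat_r; lra.
  nra.
Qed.

Definition gg (a : R) := g (Rabs a).

Lemma gg_cont x : continuous gg x.
Proof.
  destruct (Req_dec x 0) as [->|hx].
  - apply cont_intro. intros eps. destruct (g_near0 eps) as [d Hd]. exists d.
    intros y hy. unfold gg. rewrite Rabs_R0, g0. apply Hd. rewrite Rminus_0_r in hy.
    split; auto. apply Rabs_pos.
  - unfold gg. apply cont_comp. apply continuous_Rabs. apply g_cont. apply Rabs_pos_lt; auto.
Qed.


Lemma kernel_gg sigma r : 0 < sigma -> kernel sigma r = gg (r / (sigma * sqrt 2)).
Proof.
  intros hs. assert (s2 : 0 < sqrt 2) by (apply sqrt_lt_R0; lra).
  assert (c0 : 0 < sigma * sqrt 2) by (apply Rmult_lt_0_compat; auto).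
  unfold kernel. destruct (Req_EM_T r 0) as [->|hr].
  - unfold gg. unfold Rdiv. rewrite Rmult_0_l, Rabs_R0, g0. reflexivity.
  - unfold gg, g. rewrite Rabs_div by lra. rewrite (Rabs_pos_eq (sigma * sqrt 2)) by lra.
    f_equal. f_equal. 
    assert (E2 : sqrt 2 * sqrt 2 = 2) by (apply sqrt_sqrt; lra).
    assert (Er : Rabs r * Rabs r = r * r) by (rewrite <- Rabs_mult; apply Rabs_pos_eq; nra).
    simpl. apply f_equal.
    replace (Rabs r / (sigma * sqrt 2) * (Rabs r / (sigma * sqrt 2) * 1))
      with ((Rabs r * Rabs r) / ((sigma * sigma) * (sqrt 2 * sqrt 2))) by (field; lra).
    rewrite Er, E2. field. lra.
Qed.

Lemma lim2_intro (F : R * R -> R) (l : R) (Fa Fb : (R -> Prop) -> Prop) {FFa : Filter Fa} {FFb : Filter Fb} :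
  (forall eps : posreal, filter_prod Fa Fb (fun ab => Rabs (F ab - l) < eps)) ->
  filterlim F (filter_prod Fa Fb) (locally l).
Proof.
  intros H P [e He]. unfold filtermap. generalize (H e). apply filter_imp.
  intros ab h. apply He. apply ball_R. exact h.
Qed.

Lemma conv_dom (h : R -> R) : (forall x, continuous h x) ->
  (forall x, 1 <= x -> Rabs (h x) <= 2 * exp (- x)) ->
  exists l, filterlim (fun x => RInt h 0 x) (Rbar_locally p_infty) (locally l).
Proof.
  intros hc hb. apply cauchy_pinfty. intros eps.
  assert (ep := cond_pos eps).
  set (M := Rmax 1 (2 / eps) + 1).
  assert (M1 : 1 < M) by (unfold M; generalize (Rmax_l 1 (2/eps)); lra).
  assert (Me : 2 / eps < M) by (unfold M; generalize (Rmax_r 1 (2/eps)); lra).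
  assert (exh : forall a b, ex_RInt h a b) by (intros; apply exRI_cont; auto).
  assert (key : forall x y, M <= x -> x <= y -> Rabs (RInt h 0 x - RInt h 0 y) < eps).
  { intros x y hx hy.
    rewrite <- (RInt_Chasles_R h 0 x y) by auto.
    assert (E : forall a b : R, a - (a + b) = - b) by (intros; ring). rewrite E.
    rewrite Rabs_Ropp.
    apply Rle_lt_trans with (RInt (fun s => Rabs (h s)) x y).
    apply abs_RInt_le; auto.
    apply Rle_lt_trans with (RInt (fun s => 2 * exp (- s)) x y).
    apply RInt_le_R; auto. apply exRI_cont; intros; apply continuous_Rabs_comp; auto.
    apply exRI_cont; intros; apply exd_cont; auto_derive; auto.
    intros s hs; apply hb; lra.
    rewrite RInt_scal_R. rewrite int_exp_neg.
    assert (exp (- x) < / x) by (apply exp_neg_lt; lra).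
    assert (/ x <= / M) by (apply Rinv_le_contravar; lra).
    assert (/ M < eps / 2) by (apply inv_lt_swap; [lra|]; rewrite Rinv_div; lra).
    generalize (exp_pos (- y)). lra.
    apply exRI_cont; intros; apply exd_cont; auto_derive; auto. }
  exists M. intros x y hx hy. destruct (Rle_or_lt x y) as [h'|h'].
  - apply key; auto.
  - rewrite Rabs_minus_sym. apply key; lra.
Qed.

Lemma RInt_resc (h : R -> R) c A B : 0 < c -> (forall x, continuous h x) ->
  RInt (fun r => h (r / c)) A B = c * RInt h (A / c) (B / c).
Proof.
  intros hc hh.
  assert (E := RInt_comp_lin_R h (/ c) 0 A B (exRI_cont _ _ _ (fun z _ => hh z))).
  replace (/ c * A + 0) with (A / c) in E by (unfold Rdiv; ring).
  replace (/ c * B + 0) with (B / c) in E by (unfold Rdiv; ring).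
  rewrite <- E. rewrite <- RInt_scal_R.
  - apply RInt_ext. intros x _. Req. replace (/ c * x + 0) with (x / c) by (unfold Rdiv; ring). field. lra.
  - apply exRI_cont. intros z _. apply cont_mult. apply cont_const.
    apply cont_comp. apply exd_cont; auto_derive; auto. apply hh.
Qed.

Lemma RInt_flip (f : R -> R) A : (forall x, continuous f x) ->
  RInt f 0 A = RInt (fun y => -1 * f (-1 * y + 0)) 0 (- A).
Proof.
  intros hf. rewrite RInt_comp_lin_R. f_equal; ring.
  apply exRI_cont; auto.
Qed.

Lemma RInt_even0 (f : R -> R) A : (forall x, continuous f x) -> (forall x, f (- x) = f x) ->
  RInt f A 0 = RInt f 0 (- A).
Proof.
  intros hc he. rewrite RInt_swap_R by (apply exRI_cont; auto).
  rewrite RInt_flip; auto.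
  rewrite (RInt_ext _ (fun y => -1 * f y)).
  2: { intros x _. replace (-1 * x + 0) with (- x) by ring. rewrite he. reflexivity. }
  rewrite RInt_scal_R by (apply exRI_cont; auto). lra.
Qed.

Lemma RInt_odd0 (f : R -> R) A : (forall x, continuous f x) -> (forall x, f (- x) = - f x) ->
  RInt f A 0 = - RInt f 0 (- A).
Proof.
  intros hc he. rewrite RInt_swap_R by (apply exRI_cont; auto).
  rewrite RInt_flip; auto.
  rewrite (RInt_ext _ (fun y => f y)).
  2: { intros x _. replace (-1 * x + 0) with (- x) by ring. rewrite he. Req. ring. }
  reflexivity.
Qed.


Definition hC (w a : R) := gg a * cos (w * a).
Definition hS (w a : R) := gg a * sin (w * a).

Lemma hC_cont w x : continuous (hC w) x.
Proof. apply cont_mult. apply gg_cont. apply exd_cont. auto_derive. auto. Qed.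
Lemma hS_cont w x : continuous (hS w) x.
Proof. apply cont_mult. apply gg_cont. apply exd_cont. auto_derive. auto. Qed.

Lemma gg_pos x : 0 < x -> gg x = g x.
Proof. intros h. unfold gg. rewrite Rabs_pos_eq; lra. Qed.

Lemma hC_bound w x : 1 <= x -> Rabs (hC w x) <= 2 * exp (- x).
Proof.
  intros h. unfold hC. rewrite Rabs_mult, gg_pos by lra.
  assert (Rabs (cos (w * x)) <= 1) by apply Rabs_le, COS_bound.
  assert (hg := g_large x h). generalize (Rabs_pos (g x)) (Rabs_pos (cos (w * x))). nra.
Qed.
Lemma hS_bound w x : 1 <= x -> Rabs (hS w x) <= 2 * exp (- x).
Proof.
  intros h. unfold hS. rewrite Rabs_mult, gg_pos by lra.
  assert (Rabs (sin (w * x)) <= 1) by apply Rabs_le, SIN_bound.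
  assert (hg := g_large x h). generalize (Rabs_pos (g x)) (Rabs_pos (sin (w * x))). nra.
Qed.

Lemma gg_even x : gg (- x) = gg x.
Proof. unfold gg. rewrite Rabs_Ropp. reflexivity. Qed.

Lemma hC_even w x : hC w (- x) = hC w x.
Proof. unfold hC. rewrite gg_even. replace (w * - x) with (- (w * x)) by ring. rewrite cos_neg. reflexivity. Qed.
Lemma hS_odd w x : hS w (- x) = - hS w x.
Proof. unfold hS. rewrite gg_even. replace (w * - x) with (- (w * x)) by ring. rewrite sin_neg. ring. Qed.

Lemma real_part sigma t A B : 0 < sigma ->
  RInt (fun r => kernel sigma r * cos (r * t)) A B =
  (sigma * sqrt 2) * RInt (hC (sigma * sqrt 2 * t)) 0 (- A / (sigma * sqrt 2))
  + (sigma * sqrt 2) * RInt (hC (sigma * sqrt 2 * t)) 0 (B / (sigma * sqrt 2)).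
Proof.
  intros hs. assert (s2 : 0 < sqrt 2) by (apply sqrt_lt_R0; lra).
  set (c := sigma * sqrt 2). assert (c0 : 0 < c) by (apply Rmult_lt_0_compat; auto).
  set (w := sigma * sqrt 2 * t).
  set (k := fun r => hC w (r / c)).
  assert (kc : forall x, continuous k x).
  { intros x. unfold k. apply cont_comp. apply exd_cont; auto_derive; lra. apply hC_cont. }
  rewrite (RInt_ext _ k).
  2: { intros x _. unfold k, hC. rewrite kernel_gg by auto. fold c. f_equal. f_equal.
       unfold w. fold c. field. lra. }
  rewrite <- (RInt_Chasles_R k A 0 B) by (apply exRI_cont; auto).
  rewrite RInt_even0; auto.
  2: { intros x. unfold k. replace (- x / c) with (- (x / c)) by (field; lra). apply hC_even. }
  unfold k. rewrite !RInt_resc; auto. 2,3: apply hC_cont.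
  replace (0 / c) with 0 by (unfold Rdiv; ring). reflexivity.
Qed.

Lemma imag_part sigma t A B : 0 < sigma ->
  RInt (fun r => kernel sigma r * sin (r * t)) A B =
  - ((sigma * sqrt 2) * RInt (hS (sigma * sqrt 2 * t)) 0 (- A / (sigma * sqrt 2)))
  + (sigma * sqrt 2) * RInt (hS (sigma * sqrt 2 * t)) 0 (B / (sigma * sqrt 2)).
Proof.
  intros hs. assert (s2 : 0 < sqrt 2) by (apply sqrt_lt_R0; lra).
  set (c := sigma * sqrt 2). assert (c0 : 0 < c) by (apply Rmult_lt_0_compat; auto).
  set (w := sigma * sqrt 2 * t).
  set (k := fun r => hS w (r / c)).
  assert (kc : forall x, continuous k x).
  { intros x. unfold k. apply cont_comp. apply exd_cont; auto_derive; lra. apply hS_cont. }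
  rewrite (RInt_ext _ k).
  2: { intros x _. unfold k, hS. rewrite kernel_gg by auto. fold c. f_equal. f_equal.
       unfold w. fold c. field. lra. }
  rewrite <- (RInt_Chasles_R k A 0 B) by (apply exRI_cont; auto).
  rewrite RInt_odd0; auto.
  2: { intros x. unfold k. replace (- x / c) with (- (x / c)) by (field; lra). apply hS_odd. }
  unfold k. rewrite !RInt_resc; auto. 2,3: apply hS_cont.
  replace (0 / c) with 0 by (unfold Rdiv; ring). reflexivity.
Qed.

Lemma E1sq_cont y : 0 < y -> continuous (fun y => E_1 (y ^ 2)) y.
Proof.
  intros hy. apply cont_comp. apply exd_cont; auto_derive; auto.
  eapply isd_cont. apply E1_deriv. nra.
Qed.

Lemma between_pos a b x : 0 < a -> 0 < b -> Rmin a b <= x <= Rmax a b -> 0 < x.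
Proof. intros ha hb h. generalize (Rmin_glb_lt a b 0 ha hb). lra. Qed.

Lemma IBP w a b : 0 < a -> 0 < b ->
  RInt (fun r => E_1 (r ^ 2) * sin (w * r)) a b =
  sqrt PI * (w * (RInt (hC w) 0 b - RInt (hC w) 0 a) - (g b * sin (w * b) - g a * sin (w * a))).
Proof.
  intros ha hb.
  assert (sp := sqrtPI_pos).
  set (df := fun y => (- / sqrt PI * E_1 (y ^ 2)) * sin (w * y) + g y * (w * cos (w * y))).
  assert (D : RInt df a b = g b * sin (w * b) - g a * sin (w * a)).
  { apply (RInt_derive_R (fun y => g y * sin (w * y))).
    - intros x hx. assert (x0 := between_pos a b x ha hb hx).
      eapply isd_val. apply isd_mult. apply g_deriv; auto.
      apply (is_derive_comp (K := R_AbsRing) (V := R_NormedModule) sin (fun y => w * y)).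
      apply is_derive_Reals, derivable_pt_lim_sin.
      auto_derive; auto. unfold df, scal; simpl; unfold mult; simpl. ring.
    - intros x hx. assert (x0 := between_pos a b x ha hb hx). unfold df.
      apply cont_plus; apply cont_mult.
      + apply cont_mult. apply cont_const. apply E1sq_cont; auto.
      + apply exd_cont; auto_derive; auto.
      + apply g_cont; auto.
      + apply exd_cont; auto_derive; auto. }
  assert (ex1 : ex_RInt (fun r => E_1 (r ^ 2) * sin (w * r)) a b).
  { apply ex_RInt_pos; auto. intros x hx. apply cont_mult. apply E1sq_cont; auto.
    apply exd_cont; auto_derive; auto. }
  assert (ex2 : ex_RInt (fun r => g r * cos (w * r)) a b).
  { apply ex_RInt_pos; auto. intros x hx. apply cont_mult. apply g_cont; auto.
    apply exd_cont; auto_derive; auto. }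
  assert (D2 : RInt df a b = (- / sqrt PI) * RInt (fun r => E_1 (r ^ 2) * sin (w * r)) a b
                             + w * RInt (fun r => g r * cos (w * r)) a b).
  { rewrite <- !RInt_scal_R by auto. rewrite <- RInt_plus_R.
    - apply RInt_ext. intros x _. unfold df. Req. ring.
    - apply ex_RInt_pos; auto. intros x hx. apply cont_mult. apply cont_const. apply cont_mult. apply E1sq_cont; auto.
      apply exd_cont; auto_derive; auto.
    - apply ex_RInt_pos; auto. intros x hx. apply cont_mult. apply cont_const. apply cont_mult. apply g_cont; auto.
      apply exd_cont; auto_derive; auto. }
  assert (D3 : RInt (fun r => g r * cos (w * r)) a b = RInt (hC w) 0 b - RInt (hC w) 0 a).
  { rewrite (RInt_ext _ (hC w)).
    - rewrite <- (RInt_Chasles_R (hC w) 0 a b) by (apply exRI_cont; intros; apply hC_cont). lra.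
    - intros x hx. unfold hC. rewrite gg_pos; auto. apply (between_pos a b x); auto. lra. }
  rewrite D3 in D2. rewrite D in D2.
  assert (L : forall X Y Dv : R, Dv = - / sqrt PI * X + w * Y -> X = sqrt PI * (w * Y - Dv))
    by (intros X Y Dv HD; rewrite HD; field; lra).
  apply L. exact D2.
Qed.


Lemma bound2 (s1 c X Y L e : R) : 0 < c -> 0 < e -> Rabs (X - L) < e -> Rabs (Y - L) < e ->
  Rabs (s1 * (c * X) + c * Y - (s1 * (c * L) + c * L)) < c * ((Rabs s1 + 1) * e).
Proof.
  intros hc he h1 h2.
  replace (s1 * (c * X) + c * Y - (s1 * (c * L) + c * L)) with (c * (s1 * (X - L) + (Y - L))) by ring.
  rewrite Rabs_mult, (Rabs_pos_eq c) by lra. apply Rmult_lt_compat_l; auto.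
  eapply Rle_lt_trans. apply Rabs_triang. rewrite Rabs_mult.
  generalize (Rabs_pos s1) (Rabs_pos (X - L)). nra.
Qed.

Lemma lim_mp (Pf : R -> R) (L c s1 : R) : 0 < c ->
  filterlim Pf (Rbar_locally p_infty) (locally L) ->
  filterlim (fun ab => s1 * (c * Pf (- fst ab / c)) + c * Pf (snd ab / c))
    (filter_prod (Rbar_locally m_infty) (Rbar_locally p_infty)) (locally (s1 * (c * L) + c * L)).
Proof.
  intros hc H. apply lim2_intro. 1,2: typeclasses eauto. intros eps.
  assert (ep := cond_pos eps).
  assert (hk : 0 < c * (Rabs s1 + 1)) by (generalize (Rabs_pos s1); intros; apply Rmult_lt_0_compat; lra).
  assert (he : 0 < eps / (c * (Rabs s1 + 1))) by (apply Rdiv_lt_0_compat; auto).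
  destruct (lim_pinfty_elim Pf L H (mkposreal _ he)) as [M HM]. simpl in HM.
  apply Filter_prod with (fun a => M < - a / c) (fun b => M < b / c).
  - simpl. exists (- (c * M)). intros x hx. apply (Rmult_lt_reg_r c); auto. unfold Rdiv. rewrite Rmult_assoc, Rinv_l; lra.
  - simpl. exists (c * M). intros x hx. apply (Rmult_lt_reg_r c); auto. unfold Rdiv. rewrite Rmult_assoc, Rinv_l; lra.
  - intros x y hx hy. simpl.
    eapply Rlt_le_trans. apply (bound2 s1 c _ _ L (eps / (c * (Rabs s1 + 1)))); auto.
    right. field. generalize (Rabs_pos s1). intros; split; lra.
Qed.

Lemma filter_le_C (x y : R) :
  filter_le (filter_prod (locally x) (locally y)) (@locally C_R_NormedModule ((x, y) : C)).
Proof.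
  intros P [e He]. apply Filter_prod with (ball x e) (ball y e).
  - apply locally_ball.
  - apply locally_ball.
  - intros u v hu hv. apply He. split; auto.
Qed.

Lemma bound4 (s w A1 A2 A3 A4 e : R) : 0 < s -> 0 < e -> Rabs A1 < e -> Rabs A2 < e -> Rabs A3 < e -> Rabs A4 < e ->
  Rabs (s * (w * A1 - w * A2 - A3 + A4)) < s * ((2 * Rabs w + 2) * e).
Proof.
  intros hs he h1 h2 h3 h4.
  rewrite Rabs_mult, (Rabs_pos_eq s) by lra. apply Rmult_lt_compat_l; auto.
  replace (w * A1 - w * A2 - A3 + A4) with (w * A1 + (w * (- A2) + (- A3 + A4))) by ring.
  eapply Rle_lt_trans. apply Rabs_triang.
  eapply Rle_lt_trans. apply Rplus_le_compat_l. apply Rabs_triang.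
  eapply Rle_lt_trans. apply Rplus_le_compat_l. apply Rplus_le_compat_l. apply Rabs_triang.
  rewrite !Rabs_mult, !Rabs_Ropp.
  generalize (Rabs_pos w) (Rabs_pos A1) (Rabs_pos A2). nra.
Qed.

Theorem theorem5 (sigma t : R) (Hsigma : 0 < sigma) (Ht : t <> 0) :
  exists J : R,
    is_RInt_gen (fun r => E_1 (r ^ 2) * sin (sigma * sqrt 2 * t * r))
      (at_right 0) (Rbar_locally p_infty) J /\
    is_RInt_gen (V := C_R_NormedModule)
      (fun r : R => ((kernel sigma r * cos (r * t))%R, (kernel sigma r * sin (r * t))%R) : C)
      (Rbar_locally m_infty) (Rbar_locally p_infty)
      ((2 / (t * sqrt PI) * J)%R, 0%R).
Proof.
  assert (s2 : 0 < sqrt 2) by (apply sqrt_lt_R0; lra).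
  assert (c0 : 0 < sigma * sqrt 2) by (apply Rmult_lt_0_compat; auto).
  assert (sp := sqrtPI_pos).
  destruct (conv_dom (hC (sigma * sqrt 2 * t)) (hC_cont _) (hC_bound _)) as [IC HC].
  destruct (conv_dom (hS (sigma * sqrt 2 * t)) (hS_cont _) (hS_bound _)) as [IS HS].
  exists (sqrt PI * (sigma * sqrt 2 * t * IC)).
  split.
  - pose (w := sigma * sqrt 2 * t).
    apply (is_RInt_gen_intro _ _ _ (fun ab => sqrt PI * (w * (RInt (hC w) 0 (snd ab) - RInt (hC w) 0 (fst ab))
                 - (g (snd ab) * sin (w * snd ab) - g (fst ab) * sin (w * fst ab))))).
    + apply Filter_prod with (fun a => 0 < a) (fun b => 0 < b).
      * exists (mkposreal 1 Rlt_0_1). intros; auto.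
      * simpl; exists 0; auto.
      * intros a b ha hb. simpl. unfold w. rewrite <- IBP by auto. apply RInt_correct_R.
        apply ex_RInt_pos; auto. intros x hx. apply cont_mult. apply E1sq_cont; auto.
        apply exd_cont; auto_derive; auto.
    + apply lim2_intro. 1,2: typeclasses eauto. intros eps.
      assert (ep := cond_pos eps).
      assert (hk : 0 < sqrt PI * (2 * Rabs w + 2)) by (generalize (Rabs_pos w); intros; apply Rmult_lt_0_compat; lra).
      set (e := eps / (sqrt PI * (2 * Rabs w + 2))).
      assert (he : 0 < e) by (apply Rdiv_lt_0_compat; auto).
      assert (Pc : continuous (fun x => RInt (hC w) 0 x) 0).
      { eapply isd_cont. apply (is_derive_RInt (hC w) (fun x => RInt (hC w) 0 x) 0 0).
        apply filter_forall. intros; apply RInt_correct_R, exRI_cont; intros; apply hC_cont.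
        apply hC_cont. }
      destruct (cont_elim _ _ Pc (mkposreal e he)) as [d1 Hd1].
      destruct (cont_elim _ _ (hS_cont w 0) (mkposreal e he)) as [d2 Hd2].
      destruct (lim_pinfty_elim _ _ HC (mkposreal e he)) as [M1 HM1].
      simpl in Hd1, Hd2, HM1.
      rewrite RInt_point_R in Hd1.
      assert (hS0 : hS w 0 = 0) by (unfold hS; rewrite Rmult_0_r, sin_0; ring).
      rewrite hS0 in Hd2.
      assert (dp : 0 < Rmin d1 d2) by (apply Rmin_glb_lt; apply cond_pos).
      apply Filter_prod with (fun a => 0 < a < Rmin d1 d2) (fun b => Rmax M1 (Rmax 1 (2 / e)) < b).
      * exists (mkposreal _ dp). intros y hy hy0. apply ball_R_lt in hy. simpl in hy. lra.
      * simpl. exists (Rmax M1 (Rmax 1 (2 / e))). auto.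
      * intros a b [ha1 ha2] hb. simpl.
        assert (b1 : M1 < b) by (generalize (Rmax_l M1 (Rmax 1 (2 / e))); lra).
        assert (b2 : 1 < b) by (generalize (Rmax_r M1 (Rmax 1 (2 / e))) (Rmax_l 1 (2 / e)); lra).
        assert (b3 : 2 / e < b) by (generalize (Rmax_r M1 (Rmax 1 (2 / e))) (Rmax_r 1 (2 / e)); lra).
        assert (A1 : Rabs (RInt (hC w) 0 b - IC) < e) by (apply HM1; auto).
        assert (A2 : Rabs (RInt (hC w) 0 a) < e).
        { assert (h := Hd1 a). assert (Z : forall x : R, Rabs (x - 0) < e -> Rabs x < e) by (intros x; rewrite Rminus_0_r; auto).
          apply Z. apply h. rewrite Rminus_0_r.
          rewrite Rabs_pos_eq; generalize (Rmin_l d1 d2); lra. }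
        assert (A4 : Rabs (g a * sin (w * a)) < e).
        { assert (h := Hd2 a). rewrite !Rminus_0_r in h. unfold hS in h. rewrite gg_pos in h by lra.
          apply h. rewrite Rabs_pos_eq; generalize (Rmin_r d1 d2); lra. }
        assert (A3 : Rabs (g b * sin (w * b)) < e).
        { rewrite Rabs_mult. assert (Rabs (sin (w * b)) <= 1) by apply Rabs_le, SIN_bound.
          assert (hg := g_large b (Rlt_le _ _ b2)).
          assert (exp (- b) < / b) by (apply exp_neg_lt; lra).
          assert (/ b < e / 2) by (apply inv_lt_swap; [lra|]; rewrite Rinv_div; lra).
          generalize (Rabs_pos (g b)) (Rabs_pos (sin (w * b))). nra. }
        replace (sqrt PI * (w * (RInt (hC w) 0 b - RInt (hC w) 0 a) - (g b * sin (w * b) - g a * sin (w * a))) -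
                  sqrt PI * (sigma * sqrt 2 * t * IC))
          with (sqrt PI * (w * (RInt (hC w) 0 b - IC) - w * RInt (hC w) 0 a - g b * sin (w * b) + g a * sin (w * a)))
          by (unfold w; ring).
        eapply Rlt_le_trans. apply (bound4 _ _ _ _ _ _ e); auto.
        right. unfold e. field. generalize (Rabs_pos w); lra.
  - assert (kC : forall A B, ex_RInt (fun r => kernel sigma r * cos (r * t)) A B).
    { intros A B. apply (ex_RInt_ext (V := R_NormedModule) (fun r => hC (sigma * sqrt 2 * t) (r / (sigma * sqrt 2)))).
      - intros x _. unfold hC. rewrite kernel_gg by auto. f_equal. f_equal. field. lra.
      - apply exRI_cont. intros z _. apply cont_comp. apply exd_cont; auto_derive; lra. apply hC_cont. }
    assert (kS : forall A B, ex_RInt (fun r => kernel sigma r * sin (r * t)) A B).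
    { intros A B. apply (ex_RInt_ext (V := R_NormedModule) (fun r => hS (sigma * sqrt 2 * t) (r / (sigma * sqrt 2)))).
      - intros x _. unfold hS. rewrite kernel_gg by auto. f_equal. f_equal. field. lra.
      - apply exRI_cont. intros z _. apply cont_comp. apply exd_cont; auto_derive; lra. apply hS_cont. }
    apply (is_RInt_gen_intro (V := C_R_NormedModule) _ _ _
      (fun ab => ((RInt (fun r => kernel sigma r * cos (r * t)) (fst ab) (snd ab),
                   RInt (fun r => kernel sigma r * sin (r * t)) (fst ab) (snd ab)) : C))).
    + apply Filter_prod with (fun _ => True) (fun _ => True); try apply filter_true.
      intros A B _ _. simpl.
      apply (is_RInt_fct_extend_pair (U := R_NormedModule) (V := R_NormedModule)); simpl;
        apply RInt_correct_R; auto.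
    + eapply filterlim_filter_le_2. apply filter_le_C.
      apply filterlim_pair.
      * apply filterlim_ext with (f := fun ab => 1 * ((sigma * sqrt 2) * RInt (hC (sigma * sqrt 2 * t)) 0 (- fst ab / (sigma * sqrt 2)))
                 + (sigma * sqrt 2) * RInt (hC (sigma * sqrt 2 * t)) 0 (snd ab / (sigma * sqrt 2))).
        { intros ab. rewrite real_part by auto. ring. }
        replace (2 / (t * sqrt PI) * (sqrt PI * (sigma * sqrt 2 * t * IC)))
          with (1 * ((sigma * sqrt 2) * IC) + (sigma * sqrt 2) * IC) by (field; lra).
        apply lim_mp; auto.
      * apply filterlim_ext with (f := fun ab => -1 * ((sigma * sqrt 2) * RInt (hS (sigma * sqrt 2 * t)) 0 (- fst ab / (sigma * sqrt 2)))
                 + (sigma * sqrt 2) * RInt (hS (sigma * sqrt 2 * t)) 0 (snd ab / (sigma * sqrt 2))).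
        { intros ab. rewrite imag_part by auto. ring. }
        pose proof (lim_mp _ IS (sigma * sqrt 2) (-1) c0 HS) as L.
        replace (-1 * ((sigma * sqrt 2) * IS) + (sigma * sqrt 2) * IS) with 0 in L by ring.
        exact L.
Qed.
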